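(* Assume the refinement setting of the context, with $F(u)=u$, $G(u)=u$, $p\cap\overline{q}\subseteq F(p\cup q)$, $p\cap\overline{q}\subseteq\mathrm{grd}(G)$, $p\cap\overline{q}\subseteq G(q)$, $$r^{-1}[p\cap\overline{q}]\cap\mathrm{grd}(G')\subseteq F'(\mathrm{grd}(G'))\cap H(\mathrm{grd}(G')),$$ and, in the concrete system $S'$, $$\big(r^{-1}[p\cap\overline{q}]\cap\overline{\mathrm{grd}(G')}\big)\leadsto\mathrm{grd}(G').$$ Then $r^{-1}[p]\leadsto r^{-1}[q]$ holds in $S'$.
   Context: Refinement setting: $u$ (abstract states) and $v$ (concrete states) are sets; $F,G$ are conjunctive set transformers on $u$ (conjunctive = preserves intersections of nonempty families of subsets, hence monotone). $\mathrm{grd}(E)=\overline{E(\varnothing)}$. The concrete system $S'$ has a finite family of conjunctive set transformers (events) on $v$, partitioned into three subfamilies whose choices (pointwise intersections) are $F'$, $G'$, $H$, the subfamily for $G'$ being nonempty; $S'(s)=F'(s)\cap G'(s)\cap H(s)$. $r\subseteq v\times u$ is a total relation (every $y\in v$ is related to some $x\in u$). For $a\subseteq v$, $r[a]=\{x\in u\mid\exists y\in a,(y,x)\in r\}$; for $b\subseteq u$, $r^{-1}[b]=\{y\in v\mid\exists x\in b,(y,x)\in r\}$. Complements $\overline{\cdot}$ are taken in $u$ for subsets of $u$ and in $v$ for subsets of $v$. Refinement conditions: for all $s\subseteq v$, $F(\overline{r[\overline{s}]})\subseteq\overline{r[\overline{F'(s)}]}$, $G(\overline{r[\overline{s}]})\subseteq\overline{r[\overline{G'(s)}]}$,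 $\overline{r[\overline{s}]}\subseteq\overline{r[\overline{H(s)}]}$. $p,q\subseteq u$. Ensures in $S'$: for $a,b\subseteq v$ and a helpful event $E$ (choice of a nonempty subfamily of the events of $S'$), $E\cdot a\gg_w b$ means $a\cap\overline{b}\subseteq S'(a\cup b)$ and $a\cap\overline{b}\subseteq\mathrm{grd}(E)\cap E(b)$. Leads-to $\leadsto$ in $S'$ is the smallest relation on $\mathbb{P}(v)$ such that: (BRL) if $E\cdot a\gg_w b$ for some helpful $E$ then $a\leadsto b$; (TRA) $a\leadsto c$ and $c\leadsto b$ imply $a\leadsto b$; (DSJ) if $a_m\leadsto b$ for all $m$ in an index set $M$ then $\bigcup_{m\in M}a_m\leadsto b$. *)

(* Defs.v *)
From mathcomp Require Import all_boot.
From mathcomp Require Export classical_sets cardinality.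
Set Implicit Arguments. Unset Strict Implicit. Unset Printing Implicit Defensive.
Local Open Scope classical_set_scope.

Definition conjunctive (T : Type) (E : set T -> set T) : Prop :=
  forall A : set (set T), A !=set0 ->
    E (\bigcap_(a in A) a) = \bigcap_(a in A) E a.

Definition grd (T : Type) (E : set T -> set T) : set T := ~` (E set0).

Definition choice (I T : Type) (ev : I -> set T -> set T) (A : set I)
  : set T -> set T := fun s => \bigcap_(i in A) ev i s.

Definition rimg (v u : Type) (r : v -> u -> Prop) (a : set v) : set u :=
  [set x | exists2 y, a y & r y x].
Definition rpre (v u : Type) (r : v -> u -> Prop) (b : set u) : set v :=
  [set y | exists2 x, b x & r y x].

Definition ensures (T : Type) (S E : set T -> set T) (a b : set T) : Prop :=
  a `&` ~` b `<=` S (a `|` b) /\ a `&` ~` b `<=` grd E `&` E b.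

(* leads-to in the concrete system with events ev : I -> ...,
   S is the system transformer; helpful events are choices of nonempty
   subfamilies of the events. *)
Inductive leadsto (I T : Type) (ev : I -> set T -> set T) (S : set T -> set T)
  : set T -> set T -> Prop :=
| lt_BRL (a b : set T) (A : set I) :
    A !=set0 -> ensures S (choice ev A) a b -> leadsto ev S a b
| lt_TRA (a c b : set T) :
    leadsto ev S a c -> leadsto ev S c b -> leadsto ev S a b
| lt_DSJ (Fa : set (set T)) (b : set T) :
    (forall a, Fa a -> leadsto ev S a b) ->
    leadsto ev S (\bigcup_(a in Fa) a) b.

(* Main.v *)
Require Import Defs.
From mathcomp Require Import all_boot classical_sets cardinality.
From Stdlib Require Import Classical.
Set Implicit Arguments. Unset Strict Implicit.
Local Open Scope classical_set_scope.

Lemma conj2 T (E : set T -> set T) : conjunctive E ->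
  forall X Y, E (X `&` Y) = E X `&` E Y.
Proof.
move=> hE X Y.
have h := hE [set Z | Z = X \/ Z = Y] (ex_intro _ X (or_introl erefl)).
have e1 : \bigcap_(a in [set Z | Z = X \/ Z = Y]) a = X `&` Y.
  apply/seteqP; split => z /=.
    by move=> h'; split; apply h'; [left|right].
  by move=> [hx hy] Z [->|->].
have e2 : \bigcap_(a in [set Z | Z = X \/ Z = Y]) E a = E X `&` E Y.
  apply/seteqP; split => z /=.
    by move=> h'; split; apply h'; [left|right].
  by move=> [hx hy] Z [->|->].
by rewrite e1 e2 in h.
Qed.

Lemma conjM T (E : set T -> set T) : conjunctive E ->
  forall X Y, X `<=` Y -> E X `<=` E Y.
Proof.
move=> hE X Y hXY z hz.
have : E (X `&` Y) z by rewrite setIidl.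
by rewrite conj2 // => -[].
Qed.

Section LT.
Variables (I T : Type) (ev : I -> set T -> set T) (S : set T -> set T).
Hypothesis hevI : forall i X Y, ev i (X `&` Y) = ev i X `&` ev i Y.
Hypothesis hevM : forall i X Y, X `<=` Y -> ev i X `<=` ev i Y.
Hypothesis hS : forall A0 s, S s `<=` choice ev A0 s.
Hypothesis hSI : forall X Y, S X `&` S Y `<=` S (X `&` Y).
Hypothesis hSM : forall X Y, X `<=` Y -> S X `<=` S Y.
Variable P0 : set I.
Hypothesis hP0 : P0 !=set0.

Lemma chI A0 X Y : choice ev A0 X `&` choice ev A0 Y `<=` choice ev A0 (X `&` Y).
Proof. move=> z [h1 h2] i Ai; rewrite hevI; split; [exact: h1|exact: h2]. Qed.

Lemma chM A0 X Y : X `<=` Y -> choice ev A0 X `<=` choice ev A0 Y.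
Proof. move=> hXY z h i Ai; exact: (@hevM i X Y hXY _ (h i Ai)). Qed.

Lemma L_sub a b : a `<=` b -> leadsto ev S a b.
Proof.
move=> hab; apply: (@lt_BRL _ _ _ _ a b P0 hP0); split => z [az nbz];
  exfalso; exact: nbz (hab _ az).
Qed.

Lemma L_subl a a' b : a `<=` a' -> leadsto ev S a' b -> leadsto ev S a b.
Proof. move=> h h'; apply: lt_TRA h'; exact: L_sub. Qed.

Lemma L_subr a b b' : b `<=` b' -> leadsto ev S a b -> leadsto ev S a b'.
Proof. move=> h h'; apply: lt_TRA h' _; exact: L_sub. Qed.

Lemma L_U a c b : leadsto ev S a b -> leadsto ev S c b -> leadsto ev S (a `|` c) b.
Proof.
move=> h1 h2; apply: (@L_subl _ (\bigcup_(x in [set Z | Z = a \/ Z = c]) x)).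
  move=> z [az|cz]; [exists a; [left|]|exists c; [right|]]; done.
apply: lt_DSJ => x [->|->] //.
Qed.

Lemma PSP a b c d : c `&` ~` d `<=` S (c `|` d) -> leadsto ev S a b ->
  leadsto ev S (a `&` c) ((b `&` c) `|` d).
Proof.
move=> hcd; elim => {a b}.
- move=> a b A0 hA0 [h1 h2]; apply: (lt_BRL hA0); split.
  + move=> z [[az cz] nz].
    have nbz : ~ b z by move=> bz; apply: nz; left.
    have ndz : ~ d z by move=> dz; apply: nz; right.
    have := hSI (conj (h1 z (conj az nbz)) (hcd z (conj cz ndz))).
    apply: hSM => w [[aw|bw] [cw|dw]].
    * by left; split.
    * by right; right.
    * by right; left; split.
    * by right; right.
  + move=> z [[az cz] nz].
    have nbz : ~ b z by move=> bz; apply: nz; left.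
    have ndz : ~ d z by move=> dz; apply: nz; right.
    have [g1 g2] := h2 z (conj az nbz).
    split => //.
    have := chI (conj g2 (@hS A0 _ z (hcd z (conj cz ndz)))).
    apply: chM => w [bw [cw|dw]]; [by left|by right].
- move=> a e b _ IH1 _ IH2; apply: lt_TRA IH1 _.
  apply: L_U => //; exact: L_sub.
- move=> Fa b _ IH.
  apply: (@L_subl _ (\bigcup_(x in [set y `&` c | y in Fa]) x)).
    move=> z [[y Fy yz] cz]; exists (y `&` c) => //; by exists y.
  apply: lt_DSJ => x [y Fy <-]; exact: IH.
Qed.
End LT.

Theorem lemma7 (u v I : Type)
  (F G : set u -> set u) (ev : I -> set v -> set v)
  (PF PG PH : set I) (r : v -> u -> Prop) (p q : set u) :
  conjunctive F -> conjunctive G ->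
  (forall i, conjunctive (ev i)) ->
  finite_set [set: I] ->
  (* PF, PG, PH partition the events; PG is nonempty *)
  PF `|` PG `|` PH = setT ->
  PF `&` PG = set0 -> PF `&` PH = set0 -> PG `&` PH = set0 ->
  PG !=set0 ->
  (* r is total *)
  (forall y : v, exists x : u, r y x) ->
  let F' := choice ev PF in
  let G' := choice ev PG in
  let H := choice ev PH in
  let S' := fun s => F' s `&` G' s `&` H s in
  (* refinement conditions *)
  (forall s : set v, F (~` rimg r (~` s)) `<=` ~` rimg r (~` F' s)) ->
  (forall s : set v, G (~` rimg r (~` s)) `<=` ~` rimg r (~` G' s)) ->
  (forall s : set v, ~` rimg r (~` s) `<=` ~` rimg r (~` H s)) ->
  (* hypotheses of the lemma *)
  F setT = setT ->
  G setT = setT ->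
  p `&` ~` q `<=` F (p `|` q) ->
  p `&` ~` q `<=` grd G ->
  p `&` ~` q `<=` G q ->
  rpre r (p `&` ~` q) `&` grd G' `<=` F' (grd G') `&` H (grd G') ->
  leadsto ev S' (rpre r (p `&` ~` q) `&` ~` grd G') (grd G') ->
  leadsto ev S' (rpre r p) (rpre r q).
Proof.
move=> hFc hGc hevc _ hpart _ _ _ hPG _ F' G' H S' rF rG rH _ _ hpF _ hpG hAg hlt.
have hevI : forall i X Y, ev i (X `&` Y) = ev i X `&` ev i Y.
  by move=> i; apply: conj2.
have hevM : forall i X Y, X `<=` Y -> ev i X `<=` ev i Y.
  by move=> i; apply: conjM.
have hS : forall A0 s, S' s `<=` choice ev A0 s.
  move=> A0 s z [[hf hg] hh] i _.
  have : (PF `|` PG `|` PH) i by rewrite hpart.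
  by case => [[hi|hi]|hi]; [apply: hf|apply: hg|apply: hh].
have hSI : forall X Y, S' X `&` S' Y `<=` S' (X `&` Y).
  move=> X Y z [[[f1 g1] h1] [[f2 g2] h2]].
  by split; [split|]; apply: (chI hevI) => //; split.
have hSM : forall X Y, X `<=` Y -> S' X `<=` S' Y.
  move=> X Y hXY z [[f1 g1] h1].
  by split; [split|]; apply: (chM hevM hXY).
have lift : forall (E : set v) x y, (~` rimg r (~` E)) x -> r y x -> E y.
  move=> E x y hx ryx; apply: NNPP => nE; apply: hx; by exists y.
have clos : forall (X : set u) (s : set v),
    (forall x y, X x -> r y x -> s y) -> X `<=` ~` rimg r (~` s).
  move=> X s hX x Xx [y ny ryx]; exact: ny (hX x y Xx ryx).
set A := rpre r (p `&` ~` q).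
set B := rpre r q.
set g := grd G'.
have cl_pq : forall x y, (p `|` q) x -> r y x -> (A `|` B) y.
  move=> x y hx ryx; case: (classic (q x)) => qx.
    by right; exists x.
  by left; exists x => //; case: hx.
have AF : A `<=` F' (A `|` B).
  move=> y [x hx ryx]; apply: (lift _ x) => //; apply: rF.
  exact: (conjM hFc (clos _ _ cl_pq) (hpF x hx)).
have AG : A `<=` G' B.
  move=> y [x hx ryx]; apply: (lift _ x) => //; apply: rG.
  apply: (conjM hGc _ (hpG x hx)); apply: clos => x' y' qx' ryx'; by exists x'.
have AH : A `<=` H (A `|` B).
  move=> y [x hx ryx]; apply: (lift _ x) => //; apply: rH.
  apply: (clos _ _ cl_pq); by left; case: hx.
have AS : A `&` ~` B `<=` S' (A `|` B).
  move=> y [Ay _]; split; [split|]; [exact: AF|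
    exact: (chM hevM (fun z bz => or_intror bz) (AG y Ay))|exact: AH].
have Ag : leadsto ev S' (A `&` g) B.
  apply: (lt_BRL hPG); split.
  - move=> y [[Ay gy] nB]; have [hf hh] := hAg y (conj Ay gy).
    split; [split|].
    + have := chI hevI (conj hf (AF y Ay)); apply: (chM hevM) => // w [gw [aw|bw]];
        [by left|by right].
    + by apply: (chM hevM _ (AG y Ay)) => w bw; right.
    + have := chI hevI (conj hh (AH y Ay)); apply: (chM hevM) => // w [gw [aw|bw]];
        [by left|by right].
  - by move=> y [[Ay gy] _]; split => //; exact: AG.
have BB : leadsto ev S' B B by exact: (@L_sub _ _ ev S' _ hPG).
apply: (L_subl hPG (a' := B `|` ((A `&` ~` g) `|` (A `&` g)))).
  move=> y [x px ryx]; case: (classic (q x)) => qx.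
    by left; exists x.
  right; case: (classic (g y)) => gy.
    by right; split => //; exists x.
  by left; split => //; exists x.
apply: (L_U hPG) => //; apply: (L_U hPG) => //.
have := PSP hevI hevM hS hSI hSM hPG AS hlt.
move=> h; apply: (L_subl hPG (a' := (A `&` ~` g) `&` A)).
  by move=> y [Ay ng]; split.
apply: lt_TRA h _; apply: (L_U hPG) => //.
apply: (L_subl hPG (a' := A `&` g)) => //.
by move=> y [gy Ay]; split.
Qed.
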